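(* Let $\mathcal{P}$ be a topological property and let $X$ be a $T_1$-space with at least two points. Then $X$ is locally $\mathcal{P}$ if and only if every card of $X$ is locally $\mathcal{P}$. In particular, if $X$ and $Z$ are $T_1$-spaces with $\mathcal{D}(X)=\mathcal{D}(Z)$ (and at least two points), then $X$ is locally $\mathcal{P}$ if and only if $Z$ is locally $\mathcal{P}$.
   Context: A space $X$ is locally $\mathcal{P}$ if for every $x \in X$ and every open $U \ni x$ there is $A \subseteq X$ with $x \in \operatorname{int}(A) \subseteq A \subseteq U$ such that $A$ (as a subspace) has $\mathcal{P}$. For a topological space $X$ and $x \in X$, the set $X\setminus\{x\}$ carries the subspace topology. A card of $X$ is a space homeomorphic to $X \setminus \{x\}$ for some $x \in X$. The deck of $X$ is $\mathcal{D}(X)=\{[X\setminus\{x\}]_\sim : x \in X\}$, where $[Y]_\sim$ denotes the homeomorphism class of $Y$. *)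

(* Defs.v *)
From Stdlib Require Import Classical.

Record TopSpace : Type := mkTop {
  carrier :> Type;
  is_open : (carrier -> Prop) -> Prop;
  open_ext : forall U V : carrier -> Prop,
      (forall x, U x <-> V x) -> is_open U -> is_open V;
  open_full : is_open (fun _ => True);
  open_inter : forall U V, is_open U -> is_open V -> is_open (fun x => U x /\ V x);
  open_union : forall F : (carrier -> Prop) -> Prop,
      (forall U, F U -> is_open U) -> is_open (fun x => exists U, F U /\ U x)
}.

Arguments is_open {t} _.

Definition sub_open (X : TopSpace) (A : X -> Prop) (V : {x : X | A x} -> Prop) : Prop :=
  exists U : X -> Prop, is_open U /\ forall a, V a <-> U (proj1_sig a).

Lemma sub_open_ext (X : TopSpace) (A : X -> Prop) : forall U V : {x : X | A x} -> Prop,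
  (forall x, U x <-> V x) -> sub_open X A U -> sub_open X A V.
Proof.
  intros U V H [W [HW HU]]. exists W; split; auto.
  intro a. rewrite <- H. apply HU.
Qed.

Lemma sub_open_full (X : TopSpace) (A : X -> Prop) : sub_open X A (fun _ => True).
Proof. exists (fun _ => True). split; [apply open_full | tauto]. Qed.

Lemma sub_open_inter (X : TopSpace) (A : X -> Prop) : forall U V, sub_open X A U -> sub_open X A V ->
  sub_open X A (fun x => U x /\ V x).
Proof.
  intros U V [U' [HU' EU]] [V' [HV' EV]].
  exists (fun x => U' x /\ V' x). split; [apply open_inter; auto|].
  intro a. rewrite EU, EV. tauto.
Qed.

Lemma sub_open_union (X : TopSpace) (A : X -> Prop) : forall F : ({x : X | A x} -> Prop) -> Prop,
  (forall U, F U -> sub_open X A U) -> sub_open X A (fun x => exists U, F U /\ U x).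
Proof.
  intros F HF.
  exists (fun x => exists W, (is_open W /\ exists V, F V /\ forall a, V a <-> W (proj1_sig a)) /\ W x).
  split.
  - apply open_union. intros W [HW _]; exact HW.
  - intro a; split.
    + intros [V [FV Va]]. destruct (HF V FV) as [W [HW EW]].
      exists W. split; [split; [exact HW | exists V; auto] | apply EW; exact Va].
    + intros [W [[HW [V [FV EV]]] Wa]]. exists V. split; [exact FV | apply EV; exact Wa].
Qed.

Definition subspace (X : TopSpace) (A : X -> Prop) : TopSpace :=
  @mkTop {x : X | A x} (sub_open X A) (sub_open_ext X A) (sub_open_full X A)
         (sub_open_inter X A) (sub_open_union X A).

Definition continuous (X Y : TopSpace) (f : X -> Y) : Prop :=
  forall V : Y -> Prop, is_open V -> is_open (fun x => V (f x)).

Definition homeomorphic (X Y : TopSpace) : Prop :=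
  exists (f : X -> Y) (g : Y -> X),
    (forall x, g (f x) = x) /\ (forall y, f (g y) = y) /\
    continuous X Y f /\ continuous Y X g.

Definition topological_property (P : TopSpace -> Prop) : Prop :=
  forall X Y : TopSpace, homeomorphic X Y -> P X -> P Y.

Definition interior_pt (X : TopSpace) (A : X -> Prop) (x : X) : Prop :=
  exists V : X -> Prop, is_open V /\ V x /\ (forall y, V y -> A y).

(* X is locally P: for every x and open U ∋ x there is A with
   x ∈ int(A) ⊆ A ⊆ U and the subspace A has P.  (int(A) ⊆ A is automatic.) *)
Definition locally (P : TopSpace -> Prop) (X : TopSpace) : Prop :=
  forall (x : X) (U : X -> Prop), is_open U -> U x ->
    exists A : X -> Prop, interior_pt X A x /\ (forall y, A y -> U y) /\ P (subspace X A).

Definition T1 (X : TopSpace) : Prop :=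
  forall x y : X, x <> y -> exists U : X -> Prop, is_open U /\ U x /\ ~ U y.

Definition punctured (X : TopSpace) (x : X) : TopSpace :=
  subspace X (fun y => y <> x).

Definition is_card (X Y : TopSpace) : Prop :=
  exists x : X, homeomorphic Y (punctured X x).

(* D(X) = D(Z): the sets of homeomorphism classes of cards coincide. *)
Definition same_deck (X Z : TopSpace) : Prop :=
  (forall x : X, exists z : Z, homeomorphic (punctured X x) (punctured Z z)) /\
  (forall z : Z, exists x : X, homeomorphic (punctured Z z) (punctured X x)).

Definition at_least_two_points (X : TopSpace) : Prop :=
  exists x y : X, x <> y.

(* Main.v *)
Require Import Defs.
From Stdlib Require Import Classical.

Lemma sig_eq {T : Type} {A : T -> Prop} (a b : {x | A x}) :
  proj1_sig a = proj1_sig b -> a = b.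
Proof. destruct a, b; simpl; intros ->; f_equal; apply proof_irrelevance. Qed.

Lemma cont_proj (X : TopSpace) (A : X -> Prop) :
  continuous (subspace X A) X (fun a => proj1_sig a).
Proof. intros V HV. exists V; split; [exact HV | intros; tauto]. Qed.

Lemma cont_into_sub (Z X : TopSpace) (A : X -> Prop) (h : Z -> subspace X A) :
  continuous Z X (fun z => proj1_sig (h z)) -> continuous Z (subspace X A) h.
Proof.
  intros Hc V [U [HU EU]].
  apply open_ext with (fun z => U (proj1_sig (h z))).
  - intros; rewrite EU; tauto.
  - apply Hc; auto.
Qed.

Lemma cont_comp (X Y Z : TopSpace) (f : X -> Y) (g : Y -> Z) :
  continuous X Y f -> continuous Y Z g -> continuous X Z (fun x => g (f x)).
Proof. intros Hf Hg V HV. exact (Hf _ (Hg V HV)). Qed.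

Lemma homeo_sym X Y : homeomorphic X Y -> homeomorphic Y X.
Proof. intros [f [g [H1 [H2 [H3 H4]]]]]. exists g, f; auto. Qed.

Lemma homeo_refl X : homeomorphic X X.
Proof.
  exists (fun x => x), (fun x => x); repeat split; intros V HV; exact HV.
Qed.

Lemma loc_homeo (P : TopSpace -> Prop) (Y Z : TopSpace) :
  topological_property P -> homeomorphic Y Z -> locally P Y -> locally P Z.
Proof.
  intros HP [f [g [gf [fg [cf cg]]]]] HY z U HU Uz.
  destruct (HY (g z) (fun y => U (f y)) (cf U HU)) as [A [[V [HV [Vx VA]]] [AU PA]]].
  { rewrite fg; exact Uz. }
  exists (fun w => A (g w)). split; [|split].
  - exists (fun w => V (g w)). split; [apply cg; exact HV|]. split; auto.
  - intros y Ay. rewrite <- (fg y). apply AU; exact Ay.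
  - apply (HP (subspace Y A)); [|exact PA].
    assert (Hh : forall a : {x : Y | A x}, A (g (f (proj1_sig a)))).
    { intros a; rewrite gf; exact (proj2_sig a). }
    exists (fun a : subspace Y A => (exist _ (f (proj1_sig a)) (Hh a) : subspace Z (fun w => A (g w)))).
    exists (fun b : subspace Z (fun w => A (g w)) => (exist _ (g (proj1_sig b)) (proj2_sig b) : subspace Y A)).
    split; [|split; [|split]].
    + intros a; apply sig_eq; simpl; apply gf.
    + intros b; apply sig_eq; simpl; apply fg.
    + apply cont_into_sub; simpl. apply cont_comp with (Y := Y); [apply cont_proj | exact cf].
    + apply cont_into_sub; simpl. apply cont_comp with (Y := Z); [apply cont_proj | exact cg].
Qed.

Lemma loc_punct (P : TopSpace -> Prop) (X : TopSpace) (x : X) :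
  topological_property P -> T1 X -> locally P X -> locally P (punctured X x).
Proof.
  intros HP HT HX p W [U [HU EU]] Wp.
  destruct p as [p px]. simpl in *.
  destruct (HT p x px) as [O [HO [Op Ox]]].
  destruct (HX p (fun z => U z /\ O z) (open_inter _ _ _ HU HO)) as [A [[V [HV [Vp VA]]] [AU PA]]].
  { split; [apply (EU (exist _ p px)); exact Wp | exact Op]. }
  exists (fun q : punctured X x => A (proj1_sig q)). split; [|split].
  - exists (fun q : punctured X x => V (proj1_sig q)). split; [|split].
    + exists V; split; [exact HV | intros; tauto].
    + exact Vp.
    + intros q; apply VA.
  - intros q Aq. apply EU. apply (AU _ Aq).
  - apply (HP (subspace X A)); [|exact PA].
    assert (Hn : forall a : {z : X | A z}, proj1_sig a <> x).
    { intros a E. apply Ox. rewrite <- E. apply (AU _ (proj2_sig a)). }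
    exists (fun a : subspace X A =>
      (exist (fun q : punctured X x => A (proj1_sig q))
             (exist (fun y => y <> x) (proj1_sig a) (Hn a)) (proj2_sig a)
        : subspace (punctured X x) (fun q : punctured X x => A (proj1_sig q)))).
    exists (fun b : subspace (punctured X x) (fun q : punctured X x => A (proj1_sig q)) =>
      (exist _ (proj1_sig (proj1_sig b)) (proj2_sig b) : subspace X A)).
    split; [|split; [|split]].
    + intros a; apply sig_eq; reflexivity.
    + intros b; apply sig_eq; apply sig_eq; reflexivity.
    + apply cont_into_sub; simpl. apply cont_into_sub; simpl. apply cont_proj.
    + apply cont_into_sub; simpl.
      apply cont_comp with (Y := punctured X x); [apply cont_proj|apply cont_proj].
Qed.

Lemma loc_from_punct (P : TopSpace -> Prop) (X : TopSpace) :
  topological_property P -> T1 X -> at_least_two_points X ->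
  (forall y : X, locally P (punctured X y)) -> locally P X.
Proof.
  intros HP HT [a0 [b0 ab]] Hc x U HU Ux.
  assert (Hy : exists y : X, y <> x).
  { destruct (classic (a0 = x)) as [E|E]; [exists b0; congruence | exists a0; exact E]. }
  destruct Hy as [y yx].
  assert (xy : x <> y) by congruence.
  destruct (HT x y xy) as [O [HO [Ox Oy]]].
  destruct (Hc y (exist _ x xy) (fun q => U (proj1_sig q))) as [A' [[V' [HV' [Vx VA]]] [AU PA]]].
  { exists U; split; [exact HU | intros; tauto]. }
  { exact Ux. }
  destruct HV' as [V [HV EV]].
  set (A := fun z : X => z <> y /\ forall h : z <> y, A' (exist _ z h)).
  exists A. split; [|split].
  - exists (fun z => V z /\ O z). split; [apply open_inter; auto|]. split.
    + split; [apply (EV (exist _ x xy)); exact Vx | exact Ox].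
    + intros z [Vz Oz]. assert (zy : z <> y) by (intro E; subst; contradiction).
      split; [exact zy|]. intros h. apply VA. apply (EV (exist _ z h)). exact Vz.
  - intros z [zy Hz]. apply (AU _ (Hz zy)).
  - apply (HP (subspace (punctured X y) A')); [|exact PA].
    assert (H1 : forall b : {q : punctured X y | A' q}, A (proj1_sig (proj1_sig b))).
    { intros [[z zy] Hb]; simpl. split; [exact zy|]. intros h.
      replace h with zy by apply proof_irrelevance. exact Hb. }
    assert (H2 : forall a : {z : X | A z}, proj1_sig a <> y).
    { intros [z Hz]; exact (proj1 Hz). }
    assert (H3 : forall a : {z : X | A z}, A' (exist _ (proj1_sig a) (H2 a))).
    { intros a. destruct (proj2_sig a) as [_ Hz]. apply Hz. }
    exists (fun b : subspace (punctured X y) A' =>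
      (exist _ (proj1_sig (proj1_sig b)) (H1 b) : subspace X A)).
    exists (fun a : subspace X A =>
      (exist A' (exist (fun z => z <> y) (proj1_sig a) (H2 a)) (H3 a)
        : subspace (punctured X y) A')).
    split; [|split; [|split]].
    + intros b; apply sig_eq; apply sig_eq; reflexivity.
    + intros a; apply sig_eq; reflexivity.
    + apply cont_into_sub; simpl.
      apply cont_comp with (Y := punctured X y); [apply cont_proj|apply cont_proj].
    + apply cont_into_sub; simpl. apply cont_into_sub; simpl. apply cont_proj.
Qed.

Theorem theorem3p2 :
  (forall (P : TopSpace -> Prop) (X : TopSpace),
      topological_property P -> T1 X -> at_least_two_points X ->
      (locally P X <-> forall Y : TopSpace, is_card X Y -> locally P Y)) /\
  (forall (P : TopSpace -> Prop) (X Z : TopSpace),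
      topological_property P ->
      T1 X -> T1 Z -> at_least_two_points X -> at_least_two_points Z ->
      same_deck X Z ->
      (locally P X <-> locally P Z)).
Proof.
  assert (Part1 : forall (P : TopSpace -> Prop) (X : TopSpace),
      topological_property P -> T1 X -> at_least_two_points X ->
      (locally P X <-> forall Y : TopSpace, is_card X Y -> locally P Y)).
  { intros P X HP HT H2. split.
    - intros HX Y [x Hx]. apply (loc_homeo P (punctured X x)); auto.
      + apply homeo_sym; exact Hx.
      + apply loc_punct; auto.
    - intros HY. apply loc_from_punct; auto. intros y. apply HY.
      exists y. apply homeo_refl. }
  split; [exact Part1|].
  intros P X Z HP HX HZ H2X H2Z [D1 D2].
  split.
  - intros LX. apply loc_from_punct; auto. intros z.
    destruct (D2 z) as [x Hx].
    apply (loc_homeo P (punctured X x)); auto.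
    + apply homeo_sym; exact Hx.
    + apply loc_punct; auto.
  - intros LZ. apply loc_from_punct; auto. intros x.
    destruct (D1 x) as [z Hz].
    apply (loc_homeo P (punctured Z z)); auto.
    + apply homeo_sym; exact Hz.
    + apply loc_punct; auto.
Qed.
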